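(* Consider the scalar system $\dot x=b(t)u+a(t)x^2$, where $x,u\in\mathbb{R}$. Let $\lambda>0$, $k>0$, $\gamma_a>0$, $\mu(t)=e^{\lambda t}$ and $s=\mu x$. Let $\mathcal N$ be an enhanced Nussbaum function. Apply the controller $$u=\mathcal N(\xi)\bar u,\qquad \dot\xi=\mu s\bar u,\qquad \bar u=(k+\lambda)x+\kappa(\hat a,x)x,\qquad \dot{\hat a}=\gamma_a\mu s x^2,$$ where $$\kappa(\hat a,x)=\tfrac12\big((\hat a x)^2+1\big)+\tfrac{\delta_{\Delta_a}}2(x^2+1),$$ and take $\xi(0)\ge0$. Then: 1. $\dot\xi=(k+\lambda+\kappa)s^2\ge0$. 2. $V=\tfrac12s^2+\tfrac1{2\gamma_a}(\ell_a-\hat a)^2$ satisfies $\dot V\le-ks^2+(b(t)\mathcal N(\xi)+1)\dot\xi$. 3. $V$ and $\xi$ are bounded on $[0,\infty)$, all closed-loop signals are bounded, and $|x(t)|\le Ce^{-\lambda t}$ for some constant $C$ depending on the initial conditions.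
   Context: $a(t)$ is an unknown, piecewise continuous, time-varying scalar parameter. There is an unknown constant $\ell_a$ and a known constant $\delta_{\Delta_a}>0$ such that $|a(t)-\ell_a|\le\delta_{\Delta_a}$ for all $t$. $b(t)$ is unknown and time-varying, with $b(t)\in[\underline b,\bar b]$ for unknown constants $\underline b\,\bar b>0$. Thus its sign is unknown but constant. Enhanced Nussbaum function: a $\mathcal C^\infty$ function $\mathcal N:[0,\infty)\to\mathbb{R}$, not identically zero, with $\mathcal N^+=\max\{0,\mathcal N\}$ and $\mathcal N^-=\max\{0,-\mathcal N\}$, satisfying - $\lim_{\xi\to\infty}\frac1\xi\int_0^\xi\mathcal N^{\pm}=\infty$; - $\limsup_{\xi\to\infty}\int_0^\xi\mathcal N^+/\int_0^\xi\mathcal N^-=\infty$; - $\limsup_{\xi\to\infty}\int_0^\xi\mathcal N^-/\int_0^\xi\mathcal N^+=\infty$. *)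

(* Defs.v *)
From Stdlib Require Import Reals Lra List.
From Coquelicot Require Import Coquelicot.
Open Scope R_scope.

Definition Npos (N : R -> R) (x : R) : R := Rmax 0 (N x).
Definition Nneg (N : R -> R) (x : R) : R := Rmax 0 (- N x).

(* Enhanced Nussbaum function (N given on R; only its values on [0,oo) matter).
   limsup_{xi->oo} f xi = +oo  is written  forall M X, exists xi >= X, f xi > M. *)
Definition enhanced_nussbaum (N : R -> R) : Prop :=
  (forall (n : nat) (t : R), ex_derive (Derive_n N n) t) /\
  (exists t, 0 <= t /\ N t <> 0) /\
  filterlim (fun xi => RInt (Npos N) 0 xi / xi) (Rbar_locally p_infty) (Rbar_locally p_infty) /\
  filterlim (fun xi => RInt (Nneg N) 0 xi / xi) (Rbar_locally p_infty) (Rbar_locally p_infty) /\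
  (forall M X : R, exists xi, X <= xi /\ M < RInt (Npos N) 0 xi / RInt (Nneg N) 0 xi) /\
  (forall M X : R, exists xi, X <= xi /\ M < RInt (Nneg N) 0 xi / RInt (Npos N) 0 xi).

Definition locally_finite (D : R -> Prop) : Prop :=
  forall T : R, exists l : list R, forall t, D t -> 0 <= t <= T -> In t l.

Definition piecewise_continuous (f : R -> R) (D : R -> Prop) : Prop :=
  locally_finite D /\
  (forall t, 0 < t -> ~ D t -> continuous f t) /\
  (forall t, 0 <= t -> D t ->
     (exists l, filterlim f (at_right t) (locally l)) /\
     (0 < t -> exists l, filterlim f (at_left t) (locally l))).

Definition kappa (delta ah x : R) : R :=
  / 2 * ((ah * x) ^ 2 + 1) + delta / 2 * (x ^ 2 + 1).

(* Main.v *)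
Require Import Defs.
From Stdlib Require Import Reals Lra List.
From Coquelicot Require Import Coquelicot.
Open Scope R_scope.

Lemma ball_R (c e y : R) : ball c e y <-> Rabs (y - c) < e.
Proof. reflexivity. Qed.

Lemma rlim_small (f : R -> R) (l : R) :
  filterlim f (at_right 0) (locally l) ->
  forall eps t, 0 < eps -> 0 < t -> exists e, 0 < e < t /\ Rabs (f e - l) < eps.
Proof.
  intros H eps t He Ht.
  destruct (proj1 (filterlim_locally f l) H (mkposreal eps He)) as [d Hd].
  exists (Rmin (d/2) (t/2)).
  assert (0 < d) by apply cond_pos.
  assert (Hm : 0 < Rmin (d/2) (t/2)) by (apply Rmin_pos; lra).
  split. split; [lra|]. apply Rle_lt_trans with (t/2). apply Rmin_r. lra.
  apply (Hd (Rmin (d/2) (t/2))).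
  - apply ball_R. rewrite Rminus_0_r, Rabs_pos_eq by lra.
    apply Rle_lt_trans with (d/2). apply Rmin_l. lra.
  - exact Hm.
Qed.

Lemma rlim_le (f : R -> R) (l t : R) :
  filterlim f (at_right 0) (locally l) -> 0 < t ->
  (forall s, 0 < s <= t -> f t <= f s) -> f t <= l.
Proof.
  intros H Ht Hm. destruct (Rle_or_lt (f t) l) as [|Hlt]; auto.
  destruct (rlim_small f l H (f t - l) t) as [e [He1 He2]]; try lra.
  specialize (Hm e ltac:(lra)). apply Rabs_lt_between' in He2. lra.
Qed.

Lemma cont_filterlim_at (g : R -> R) (x : R) (F : (R -> Prop) -> Prop) {FF : Filter F} (f : R -> R) :
  filterlim f F (locally x) -> continuous g x -> filterlim (fun t => g (f t)) F (locally (g x)).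
Proof. intros. eapply filterlim_comp; eauto. Qed.

Lemma lim_plus (F : (R -> Prop) -> Prop) {FF : Filter F} (f g : R -> R) a b :
  filterlim f F (locally a) -> filterlim g F (locally b) ->
  filterlim (fun t => f t + g t) F (locally (a + b)).
Proof.
  intros Hf Hg. apply (filterlim_comp_2 f g Rplus Hf Hg).
  apply (@filterlim_plus R_AbsRing R_NormedModule a b).
Qed.

Lemma lim_mult (F : (R -> Prop) -> Prop) {FF : Filter F} (f g : R -> R) a b :
  filterlim f F (locally a) -> filterlim g F (locally b) ->
  filterlim (fun t => f t * g t) F (locally (a * b)).
Proof.
  intros Hf Hg. apply (filterlim_comp_2 f g Rmult Hf Hg).
  apply (@filterlim_mult R_AbsRing a b).
Qed.

Lemma lim_const (F : (R -> Prop) -> Prop) {FF : Filter F} (c : R) : filterlim (fun _ => c) F (locally c).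
Proof. apply filterlim_const. Qed.

Lemma lim_opp (F : (R -> Prop) -> Prop) {FF : Filter F} (f : R -> R) a :
  filterlim f F (locally a) -> filterlim (fun t => - f t) F (locally (- a)).
Proof.
  intros Hf. apply (filterlim_comp _ _ _ f Ropp F (locally a) (locally (-a))); auto.
  apply (@filterlim_opp R_AbsRing R_NormedModule a).
Qed.

Lemma lim_at_right (g : R -> R) : continuous g 0 -> filterlim g (at_right 0) (locally (g 0)).
Proof.
  intros H P HP. destruct (H P HP) as [d Hd]. exists d. intros y Hy _. apply Hd, Hy.
Qed.

Lemma mono_aux (f df : R -> R) (D : R -> Prop) :
  (forall t, 0 < t -> continuous f t) ->
  (forall t, 0 < t -> ~ D t -> is_derive f t (df t)) ->
  (forall t, 0 < t -> ~ D t -> df t <= 0) ->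
  forall l s t, 0 < s <= t -> (forall u, s < u < t -> D u -> In u l) -> f t <= f s.
Proof.
  intros Hc Hd Hn l. induction l as [|c l IH]; intros s t Hst Hl.
  - destruct (Req_dec s t) as [->|Hne]; [lra|].
    set (dg := fun u => if Rlt_dec s u then if Rlt_dec u t then df u else 0 else 0).
    destruct (MVT_gen f s t dg) as [c [Hc1 Hc2]].
    + rewrite Rmin_left, Rmax_right by lra. intros u Hu.
      unfold dg. destruct (Rlt_dec s u); [|lra]. destruct (Rlt_dec u t); [|lra].
      apply Hd. lra. intros HD. exact (Hl u Hu HD).
    + rewrite Rmin_left, Rmax_right by lra. intros u Hu.
      apply continuity_pt_filterlim. apply Hc. lra.
    + rewrite Rmin_left, Rmax_right in Hc1 by lra.
      assert (dg c <= 0).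
      { unfold dg. destruct (Rlt_dec s c); [|lra]. destruct (Rlt_dec c t); [|lra].
        apply Hn. lra. intros HD. exact (Hl c (conj r r0) HD). }
      assert (dg c * (t - s) <= 0). { apply Rmult_le_0_r; lra. }
      lra.
  - destruct (Rlt_dec s c) as [Hsc|Hsc]; [destruct (Rlt_dec c t) as [Hct|Hct]|].
    + apply Rle_trans with (f c).
      * apply IH. lra. intros u Hu HD. destruct (Hl u ltac:(lra) HD) as [E|E]; auto. lra.
      * apply IH. lra. intros u Hu HD. destruct (Hl u ltac:(lra) HD) as [E|E]; auto. lra.
    + apply IH. lra. intros u Hu HD. destruct (Hl u Hu HD) as [E|E]; auto. lra.
    + apply IH. lra. intros u Hu HD. destruct (Hl u Hu HD) as [E|E]; auto. lra.
Qed.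

Lemma mono (f df : R -> R) (D : R -> Prop) :
  locally_finite D ->
  (forall t, 0 < t -> continuous f t) ->
  (forall t, 0 < t -> ~ D t -> is_derive f t (df t)) ->
  (forall t, 0 < t -> ~ D t -> df t <= 0) ->
  forall s t, 0 < s <= t -> f t <= f s.
Proof.
  intros HD Hc Hd Hn s t Hst. destruct (HD t) as [l Hl].
  apply (mono_aux f df D Hc Hd Hn l). auto.
  intros u Hu HDu. apply Hl; auto. lra.
Qed.


Lemma Rmax0_lip a b : Rabs (Rmax 0 a - Rmax 0 b) <= Rabs (a - b).
Proof.
  unfold Rmax. destruct (Rle_dec 0 a); destruct (Rle_dec 0 b);
  unfold Rabs; repeat destruct Rcase_abs; lra.
Qed.

Lemma cont_Rmax0 (g : R -> R) y : continuous g y -> continuous (fun z => Rmax 0 (g z)) y.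
Proof.
  intros Hg. apply (filterlim_comp _ _ _ g (Rmax 0) (locally y) (locally (g y))); auto.
  apply filterlim_locally. intros eps. exists eps. intros z Hz.
  apply ball_R. apply ball_R in Hz. eapply Rle_lt_trans. apply Rmax0_lip. auto.
Qed.

Lemma cont_opp (g : R -> R) y : continuous g y -> continuous (fun z => - g z) y.
Proof.
  intros Hg. apply (filterlim_comp _ _ _ g Ropp (locally y) (locally (g y))); auto.
  apply (@filterlim_opp R_AbsRing R_NormedModule).
Qed.

Section Nuss.
Variable N : R -> R.
Hypothesis HNc : forall z, continuous N z.

Lemma Npos_cont z : continuous (Defs.Npos N) z.
Proof. unfold Defs.Npos. apply cont_Rmax0. auto. Qed.
Lemma Nneg_cont z : continuous (Defs.Nneg N) z.
Proof. unfold Defs.Nneg. apply cont_Rmax0, cont_opp. auto. Qed.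

Lemma RInt_deriv (g : R -> R) (Hg : forall z, continuous g z) z :
  is_derive (fun y => RInt g 0 y) z (g z).
Proof.
  apply is_derive_RInt with 0.
  - exists (mkposreal 1 Rlt_0_1). intros y _. apply RInt_correct.
    apply ex_RInt_continuous. intros; apply Hg.
  - apply Hg.
Qed.

Lemma RInt_nonneg (g : R -> R) (Hg : forall z, continuous g z) (Hp : forall z, 0 <= g z) z :
  0 <= z -> 0 <= RInt g 0 z.
Proof.
  intros. apply RInt_ge_0; auto. apply (@ex_RInt_continuous R_CompleteNormedModule). intros; apply Hg.
Qed.
End Nuss.

Lemma escape (P Q : R -> R) (c1 c2 : R) :
  0 < c1 -> 0 < c2 ->
  (forall z, 0 <= z -> 0 <= P z) ->
  filterlim (fun z => Q z / z) (Rbar_locally p_infty) (Rbar_locally p_infty) ->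
  (forall M X : R, exists z, X <= z /\ M < Q z / P z) ->
  forall T, 1 <= T -> exists z, T <= z /\ c1 * P z - c2 * Q z + z < - z.
Proof.
  intros H1 H2 HP HQ Hls T HT.
  destruct (HQ (fun y => 4 / c2 < y)) as [X HX].
  { exists (4 / c2). auto. }
  destruct (Hls (2 * c1 / c2) (Rmax T (X + 1))) as [z [Hz Hz2]].
  assert (T <= z) by (eapply Rle_trans; [apply Rmax_l|exact Hz]).
  assert (X + 1 <= z) by (eapply Rle_trans; [apply Rmax_r|exact Hz]).
  exists z. split; auto.
  specialize (HX z ltac:(lra)). simpl in HX.
  assert (Hz0 : 0 < z) by lra.
  assert (HPz := HP z ltac:(lra)).
  assert (Hm : 0 < 2 * c1 / c2) by (apply Rdiv_lt_0_compat; lra).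
  destruct (Req_dec (P z) 0) as [E|E].
  { rewrite E, Rdiv_0_r in Hz2 ||
    (rewrite E in Hz2; unfold Rdiv in Hz2; rewrite Rinv_0, Rmult_0_r in Hz2). lra. }
  assert (HPp : 0 < P z) by lra.
  assert (HQP : 2 * c1 / c2 * P z < Q z).
  { replace (Q z) with (Q z / P z * P z) by (field; lra). apply Rmult_lt_compat_r; lra. }
  assert (HQz : 4 / c2 * z < Q z).
  { replace (Q z) with (Q z / z * z) by (field; lra). apply Rmult_lt_compat_r; lra. }
  assert (E1 : c2 * (2 * c1 / c2 * P z) = 2 * c1 * P z) by (field; lra).
  assert (E2 : c2 * (4 / c2 * z) = 4 * z) by (field; lra).
  assert (c2 * (2 * c1 / c2 * P z) < c2 * Q z) by (apply Rmult_lt_compat_l; lra).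
  assert (c2 * (4 / c2 * z) < c2 * Q z) by (apply Rmult_lt_compat_l; lra).
  lra.
Qed.

Lemma Vderiv (x ah : R -> R) lam la gam t dx dah : gam <> 0 -> is_derive x t dx -> is_derive ah t dah ->
 is_derive (fun t => /2 * (exp (lam * t) * x t)^2 + / (2*gam) * (la - ah t)^2) t
  ((exp (lam*t) * x t) * (lam * (exp (lam*t) * x t) + exp (lam*t) * dx) - / gam * (la - ah t) * dah).
Proof.
intros Hg Hx Ha.
auto_derive.
split. exists dx; exact Hx. split. exists dah; exact Ha. exact I.
replace (Derive (fun x0 => x x0) t) with dx by (symmetry; apply is_derive_unique; exact Hx).
replace (Derive (fun x0 => ah x0) t) with dah by (symmetry; apply is_derive_unique; exact Ha).
field. exact Hg.
Qed.

Lemma is_derive_eq (f : R -> R) t l1 l2 : is_derive f t l1 -> l1 = l2 -> is_derive f t l2.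
Proof. intros H ->; exact H. Qed.

Lemma kappa_nonneg delta ah x : 0 <= delta -> 0 <= kappa delta ah x.
Proof.
  intros Hd. unfold kappa.
  assert (0 <= (ah * x) ^ 2) by apply pow2_ge_0.
  assert (0 <= x ^ 2) by apply pow2_ge_0.
  assert (0 <= delta / 2 * (x ^ 2 + 1)) by (apply Rmult_le_pos; lra).
  lra.
Qed.

Lemma kappa_ge delta ah x e : Rabs e <= delta -> x * e + x * ah <= kappa delta ah x.
Proof.
  intros He. unfold kappa.
  assert (H1 : x * ah <= / 2 * ((ah * x) ^ 2 + 1)).
  { assert (0 <= (ah * x - 1) ^ 2) by apply pow2_ge_0. nra. }
  assert (H2 : x * e <= Rabs x * delta).
  { apply Rle_trans with (Rabs (x * e)). apply Rle_abs. rewrite Rabs_mult.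
    apply Rmult_le_compat_l. apply Rabs_pos. exact He. }
  assert (H3 : Rabs x <= / 2 * (x ^ 2 + 1)).
  { rewrite <- pow2_abs. assert (0 <= (Rabs x - 1) ^ 2) by apply pow2_ge_0. nra. }
  assert (0 <= delta) by (eapply Rle_trans; [apply Rabs_pos|exact He]).
  assert (Rabs x * delta <= / 2 * (x ^ 2 + 1) * delta) by (apply Rmult_le_compat_r; lra).
  lra.
Qed.

Lemma abs_le_sq y : Rabs y <= 1 + y ^ 2.
Proof. rewrite <- pow2_abs. assert (0 <= Rabs y) by apply Rabs_pos. nra. Qed.

Lemma sq_le y c : Rabs y <= c -> y ^ 2 <= c ^ 2.
Proof. intros H. rewrite <- pow2_abs. apply pow_incr. split; [apply Rabs_pos|exact H]. Qed.

Theorem mainTheorem5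
  (a b : R -> R) (la delta bl bu : R)
  (lam k gam : R) (N : R -> R)
  (x xi ah : R -> R) (D : R -> Prop)
  (* plant parameters *)
  (Hdelta : 0 < delta)
  (Ha : forall t, Rabs (a t - la) <= delta)
  (Hbsign : 0 < bl * bu)
  (Hb : forall t, bl <= b t <= bu)
  (Hapc : piecewise_continuous a D)
  (* design parameters *)
  (Hlam : 0 < lam) (Hk : 0 < k) (Hgam : 0 < gam)
  (HN : enhanced_nussbaum N)
  (* closed-loop solution on [0,oo): x continuous, satisfying the ODE off the
     locally finite set D; xi, ahat continuously differentiable *)
  (Hx0 : filterlim x (at_right 0) (locally (x 0)))
  (Hxc : forall t, 0 < t -> continuous x t)
  (Hxdot : forall t, 0 < t -> ~ D t ->
     is_derive x t
       (b t * (N (xi t) * ((k + lam) * x t + kappa delta (ah t) (x t) * x t))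
        + a t * x t ^ 2))
  (Hxi0 : filterlim xi (at_right 0) (locally (xi 0)))
  (Hxidot : forall t, 0 < t ->
     is_derive xi t
       (exp (lam * t) * (exp (lam * t) * x t)
        * ((k + lam) * x t + kappa delta (ah t) (x t) * x t)))
  (Hah0 : filterlim ah (at_right 0) (locally (ah 0)))
  (Hahdot : forall t, 0 < t ->
     is_derive ah t (gam * exp (lam * t) * (exp (lam * t) * x t) * x t ^ 2))
  (Hxi_init : 0 <= xi 0) :
  let mu := fun t => exp (lam * t) in
  let s := fun t => mu t * x t in
  let ubar := fun t => (k + lam) * x t + kappa delta (ah t) (x t) * x t in
  let u := fun t => N (xi t) * ubar t in
  let xidot := fun t => mu t * s t * ubar t in
  let ahdot := fun t => gam * mu t * s t * x t ^ 2 in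
  let V := fun t => / 2 * s t ^ 2 + / (2 * gam) * (la - ah t) ^ 2 in
  (* 1. *)
  (forall t, 0 <= t ->
     xidot t = (k + lam + kappa delta (ah t) (x t)) * s t ^ 2 /\ 0 <= xidot t) /\
  (* 2. *)
  (forall t, 0 < t -> ~ D t ->
     exists dV, is_derive V t dV /\
       dV <= - k * s t ^ 2 + (b t * N (xi t) + 1) * xidot t) /\
  (* 3. *)
  (exists M, forall t, 0 <= t ->
     Rabs (V t) <= M /\ Rabs (xi t) <= M /\ Rabs (x t) <= M /\
     Rabs (ah t) <= M /\ Rabs (s t) <= M /\ Rabs (ubar t) <= M /\
     Rabs (u t) <= M /\ Rabs (xidot t) <= M /\ Rabs (ahdot t) <= M) /\
  (exists C, forall t, 0 <= t -> Rabs (x t) <= C * exp (- lam * t)).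
Proof.
  intros mu s ubar u xidot ahdot V.
  destruct HN as [HNd [_ [HPinf [HQinf [HlsP HlsQ]]]]].
  assert (HNc : forall z, continuous N z).
  { intros z. apply (@ex_derive_continuous R_AbsRing R_NormedModule). exact (HNd 0%nat z). }
  assert (Hgam0 : gam <> 0) by lra.
  assert (Hmu : forall t, 0 < mu t) by (intros; apply exp_pos).
  assert (Hkap : forall t, 0 <= kappa delta (ah t) (x t)) by (intros; apply kappa_nonneg; lra).
  assert (Hxid : forall t, xidot t = (k + lam + kappa delta (ah t) (x t)) * s t ^ 2).
  { intros t. unfold xidot, s, ubar. ring. }
  assert (Hxid0 : forall t, 0 <= xidot t).
  { intros t. rewrite Hxid. apply Rmult_le_pos. specialize (Hkap t); lra. apply pow2_ge_0. }
  set (xd := fun t => b t * (N (xi t) * ubar t) + a t * x t ^ 2).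
  set (dVe := fun t => s t * (lam * s t + mu t * xd t) - / gam * (la - ah t) * ahdot t).
  assert (HdV : forall t, 0 < t -> ~ D t -> is_derive V t (dVe t)).
  { intros t Ht HD. apply Vderiv; auto. }
  assert (HdVle : forall t, 0 < t -> dVe t <= - k * s t ^ 2 + (b t * N (xi t) + 1) * xidot t).
  { intros t Ht.
    assert (E : - k * s t ^ 2 + (b t * N (xi t) + 1) * xidot t - dVe t
      = (mu t * x t) ^ 2 * (kappa delta (ah t) (x t) - x t * (a t - la) - x t * ah t)).
    { unfold dVe, xd, ahdot, xidot, ubar, s. field. exact Hgam0. }
    assert (0 <= (mu t * x t) ^ 2 * (kappa delta (ah t) (x t) - x t * (a t - la) - x t * ah t)).
    { apply Rmult_le_pos. apply pow2_ge_0. assert (Hk1 := kappa_ge delta (ah t) (x t) (a t - la) (Ha t)). lra. }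
    lra. }
  split.
  { intros t Ht. split; auto. }
  split.
  { intros t Ht HD. exists (dVe t). split; auto. }
  set (Pf := fun z => RInt (Defs.Npos N) 0 z).
  set (Qf := fun z => RInt (Defs.Nneg N) 0 z).
  set (Ff := fun z => bu * Pf z - bl * Qf z + z).
  set (W := fun t => V t - Ff (xi t)).
  assert (HFd : forall z, is_derive Ff z (bu * Defs.Npos N z - bl * Defs.Nneg N z + 1)).
  { intros z. unfold Ff.
    assert (H1 := RInt_deriv (Defs.Npos N) (Npos_cont N HNc) z).
    assert (H2 := RInt_deriv (Defs.Nneg N) (Nneg_cont N HNc) z).
    auto_derive.
    split. eexists; exact H1. split. eexists; exact H2. exact I.
    replace (Derive (fun x0 => Pf x0) z) with (Defs.Npos N z) by (symmetry; apply is_derive_unique; exact H1).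
    replace (Derive (fun x0 => Qf x0) z) with (Defs.Nneg N z) by (symmetry; apply is_derive_unique; exact H2).
    ring. }
  assert (HFc : forall z, continuous Ff z).
  { intros z. apply (@ex_derive_continuous R_AbsRing R_NormedModule). eexists; apply HFd. }
  assert (Hxic : forall t, 0 < t -> continuous xi t).
  { intros t Ht. apply (@ex_derive_continuous R_AbsRing R_NormedModule). eexists; apply Hxidot, Ht. }
  assert (Hahc : forall t, 0 < t -> continuous ah t).
  { intros t Ht. apply (@ex_derive_continuous R_AbsRing R_NormedModule). eexists; apply Hahdot, Ht. }
  assert (Hmuc : forall t, continuous mu t).
  { intros t. apply (@ex_derive_continuous R_AbsRing R_NormedModule). unfold mu. auto_derive. exact I. }
  set (dW := fun t => dVe t - (bu * Defs.Npos N (xi t) - bl * Defs.Nneg N (xi t) + 1) * xidot t).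
  assert (HdW : forall t, 0 < t -> ~ D t -> is_derive W t (dW t)).
  { intros t Ht HD.
    assert (H1 := HdV t Ht HD).
    assert (H2 : is_derive (fun t => Ff (xi t)) t (xidot t * (bu * Defs.Npos N (xi t) - bl * Defs.Nneg N (xi t) + 1))).
    { apply (is_derive_comp Ff xi t). apply HFd. apply Hxidot, Ht. }
    assert (H3 := is_derive_minus V (fun t => Ff (xi t)) t _ _ H1 H2).
    eapply is_derive_ext. 2: eapply is_derive_eq. 2: exact H3.
    - intros t'. reflexivity.
    - unfold dW, minus, plus, opp. simpl. ring. }
  assert (HdWle : forall t, 0 < t -> ~ D t -> dW t <= 0).
  { intros t Ht HD. unfold dW.
    assert (H1 := HdVle t Ht).
    assert (HNpn : N (xi t) = Defs.Npos N (xi t) - Defs.Nneg N (xi t)).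
    { unfold Defs.Npos, Defs.Nneg, Rmax. destruct (Rle_dec 0 (N (xi t))); destruct (Rle_dec 0 (- N (xi t))); lra. }
    assert (Hp : 0 <= Defs.Npos N (xi t)) by apply Rmax_l.
    assert (Hn : 0 <= Defs.Nneg N (xi t)) by apply Rmax_l.
    assert (HX := Hxid0 t). destruct (Hb t) as [Hb1 Hb2].
    assert (0 <= (bu - b t) * Defs.Npos N (xi t) * xidot t) by (apply Rmult_le_pos; [apply Rmult_le_pos; lra | lra]).
    assert (0 <= (b t - bl) * Defs.Nneg N (xi t) * xidot t) by (apply Rmult_le_pos; [apply Rmult_le_pos; lra | lra]).
    assert (0 <= k * s t ^ 2) by (apply Rmult_le_pos; [lra|apply pow2_ge_0]).
    rewrite HNpn in H1. nra. }
  assert (Wlim : forall (Fl : (R -> Prop) -> Prop) (FF : Filter Fl) t0,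
    filterlim x Fl (locally (x t0)) -> filterlim ah Fl (locally (ah t0)) ->
    filterlim xi Fl (locally (xi t0)) -> filterlim mu Fl (locally (mu t0)) ->
    filterlim W Fl (locally (W t0))).
  { intros Fl FF t0 L1 L2 L3 L4.
    apply (filterlim_ext (fun t => / 2 * ((mu t * x t) * (mu t * x t)) + / (2 * gam) * ((la + - ah t) * (la + - ah t)) + - Ff (xi t))).
    { intros t. unfold W, V, s. ring. }
    replace (W t0) with (/ 2 * ((mu t0 * x t0) * (mu t0 * x t0)) + / (2 * gam) * ((la + - ah t0) * (la + - ah t0)) + - Ff (xi t0))
      by (unfold W, V, s; ring).
    apply (@lim_plus Fl FF). apply (@lim_plus Fl FF).
    - apply (@lim_mult Fl FF). apply (@lim_const Fl FF). apply (@lim_mult Fl FF); apply (@lim_mult Fl FF); auto.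
    - apply (@lim_mult Fl FF). apply (@lim_const Fl FF). apply (@lim_mult Fl FF); apply (@lim_plus Fl FF); try apply (@lim_const Fl FF); apply (@lim_opp Fl FF); auto.
    - apply (@lim_opp Fl FF). apply (@cont_filterlim_at _ _ Fl FF); auto. }
  assert (HWc : forall t, 0 < t -> continuous W t).
  { intros t Ht. apply Wlim. apply locally_filter. apply Hxc, Ht. apply Hahc, Ht. apply Hxic, Ht. apply Hmuc. }
  assert (HW0 : filterlim W (at_right 0) (locally (W 0))).
  { apply Wlim. apply at_right_proper_filter. exact Hx0. exact Hah0. exact Hxi0. apply lim_at_right, Hmuc. }
  assert (HWle : forall t, 0 <= t -> W t <= W 0).
  { intros t Ht. destruct (Req_dec t 0) as [->|Hne]; [lra|].
    apply rlim_le; auto. lra.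
    intros s0 Hs0. apply (mono W dW D); auto. apply Hapc. }
  assert (Hxige : forall t, 0 <= t -> xi 0 <= xi t).
  { intros t Ht. destruct (Req_dec t 0) as [->|Hne]; [lra|].
    assert (H : - xi t <= - xi 0); [|lra].
    apply (rlim_le (fun t => - xi t)). apply lim_opp. apply at_right_proper_filter. apply Hxi0. lra.
    intros s0 Hs0. apply (mono (fun t => - xi t) (fun t => - xidot t) D).
    apply Hapc. intros; apply cont_opp, Hxic; auto.
    intros t1 Ht1 _. apply (is_derive_opp xi t1 (xidot t1)). apply Hxidot, Ht1.
    intros t1 Ht1 _. specialize (Hxid0 t1). lra. lra. }
  assert (HV0 : forall t, 0 <= V t).
  { intros t. unfold V.
    assert (0 <= / (2 * gam)) by (apply Rlt_le, Rinv_0_lt_compat; lra).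
    assert (0 <= s t ^ 2) by apply pow2_ge_0.
    assert (0 <= (la - ah t) ^ 2) by apply pow2_ge_0.
    assert (0 <= / (2 * gam) * (la - ah t) ^ 2) by (apply Rmult_le_pos; lra).
    lra. }
  assert (HFxi : forall t, 0 <= t -> - W 0 <= Ff (xi t)).
  { intros t Ht. specialize (HWle t Ht). specialize (HV0 t). unfold W in HWle at 1. lra. }
  assert (Pnn : forall z, 0 <= z -> 0 <= Pf z).
  { intros z Hz. apply (RInt_nonneg (Defs.Npos N) (Npos_cont N HNc)); auto. intros; apply Rmax_l. }
  assert (Qnn : forall z, 0 <= z -> 0 <= Qf z).
  { intros z Hz. apply (RInt_nonneg (Defs.Nneg N) (Nneg_cont N HNc)); auto. intros; apply Rmax_l. }
  set (T := Rmax 1 (Rmax (xi 0 + 1) (Rabs (W 0) + 1))).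
  assert (HT : 1 <= T) by apply Rmax_l.
  assert (Hesc : exists z0, T <= z0 /\ Ff z0 < - z0).
  { destruct (Rlt_or_le 0 bl) as [Hbl|Hbl].
    - assert (Hbu : 0 < bu) by nra.
      destruct (escape Pf Qf bu bl Hbu Hbl Pnn HQinf HlsQ T HT) as [z [Hz1 Hz2]].
      exists z. split; auto.
    - assert (Hbl' : bl < 0) by (destruct Hbl; auto; subst; lra).
      assert (Hbu : bu < 0) by nra.
      destruct (escape Qf Pf (- bl) (- bu) ltac:(lra) ltac:(lra) Qnn HPinf HlsP T HT) as [z [Hz1 Hz2]].
      exists z. split; auto. unfold Ff. lra. }
  destruct Hesc as [z0 [Hz0T Hz0F]].
  assert (Hz01 : xi 0 + 1 <= z0).
  { eapply Rle_trans; [|exact Hz0T]. eapply Rle_trans; [|apply Rmax_r]. apply Rmax_l. }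
  assert (Hz02 : Rabs (W 0) + 1 <= z0).
  { eapply Rle_trans; [|exact Hz0T]. eapply Rle_trans; [|apply Rmax_r]. apply Rmax_r. }
  assert (HW0abs : W 0 <= Rabs (W 0)) by apply Rle_abs.
  assert (Hxib : forall t, 0 <= t -> xi t < z0).
  { intros t Ht. destruct (Rlt_or_le (xi t) z0) as [|Hge]; auto. exfalso.
    assert (Htp : 0 < t) by (destruct Ht; auto; subst; lra).
    destruct (rlim_small xi (xi 0) Hxi0 (z0 - xi 0) t) as [e [He1 He2]]; try lra.
    assert (Hxe : xi e < z0) by (apply Rabs_lt_between' in He2; lra).
    assert (Hu : exists u1, 0 < u1 /\ xi u1 = z0).
    { destruct (Req_dec (xi t) z0) as [E|E]. exists t; auto.
      destruct (Ranalysis5.IVT_interv (fun u => xi u - z0) e t) as [u1 [Hu1 Hu2]].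
      - intros a0 Ha0. apply continuity_pt_filterlim.
        apply lim_plus; [apply locally_filter | apply Hxic; lra | apply lim_const; apply locally_filter].
      - lra.
      - simpl; lra.
      - simpl; lra.
      - exists u1; split; lra. }
    destruct Hu as [u1 [Hu1 Hu2]].
    specialize (HFxi u1 ltac:(lra)). rewrite Hu2 in HFxi. lra. }
  destruct (continuity_ab_maj Ff (xi 0) z0) as [Mx [HMx1 HMx2]]. lra.
  { intros c Hc. apply continuity_pt_filterlim. apply HFc. }
  destruct (continuity_ab_maj (fun z => Rabs (N z)) (xi 0) z0) as [Nx [HNx1 HNx2]]. lra.
  { intros c Hc. apply continuity_pt_filterlim. apply continuous_Rabs_comp. apply HNc. }
  set (B := W 0 + Ff Mx).
  assert (Hxir : forall t, 0 <= t -> xi 0 <= xi t <= z0).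
  { intros t Ht. split. apply Hxige, Ht. apply Rlt_le, Hxib, Ht. }
  assert (HVb : forall t, 0 <= t -> V t <= B).
  { intros t Ht. specialize (HWle t Ht). specialize (HMx1 (xi t) (Hxir t Ht)).
    unfold B. unfold W in HWle at 1. lra. }
  assert (HB0 : 0 <= B) by (specialize (HVb 0 (Rle_refl 0)); specialize (HV0 0); lra).
  set (Nb := Rabs (N Nx)).
  assert (HNb0 : 0 <= Nb) by apply Rabs_pos.
  assert (Hig : 0 < / (2 * gam)) by (apply Rinv_0_lt_compat; lra).
  assert (Hs2 : forall t, 0 <= t -> s t ^ 2 <= 2 * B).
  { intros t Ht. specialize (HVb t Ht). unfold V in HVb.
    assert (0 <= / (2 * gam) * (la - ah t) ^ 2) by (apply Rmult_le_pos; [lra|apply pow2_ge_0]).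
    lra. }
  assert (Hah2 : forall t, 0 <= t -> (la - ah t) ^ 2 <= 2 * gam * B).
  { intros t Ht. specialize (HVb t Ht). unfold V in HVb.
    assert (0 <= s t ^ 2) by apply pow2_ge_0.
    assert (H1 : / (2 * gam) * (la - ah t) ^ 2 <= B) by lra.
    replace ((la - ah t) ^ 2) with ((2 * gam) * (/ (2 * gam) * (la - ah t) ^ 2)) by (field; lra).
    replace (2 * gam * B) with ((2 * gam) * B) by ring.
    apply Rmult_le_compat_l; lra. }
  set (Sb := 1 + 2 * B).
  set (Ab := Rabs la + (1 + 2 * gam * B)).
  assert (Hsb : forall t, 0 <= t -> Rabs (s t) <= Sb).
  { intros t Ht. specialize (Hs2 t Ht). assert (H := abs_le_sq (s t)). unfold Sb. lra. }
  assert (Hab : forall t, 0 <= t -> Rabs (ah t) <= Ab).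
  { intros t Ht. specialize (Hah2 t Ht). assert (H := abs_le_sq (la - ah t)).
    replace (ah t) with (la + - (la - ah t)) by ring.
    eapply Rle_trans. apply Rabs_triang. rewrite Rabs_Ropp. unfold Ab. lra. }
  assert (Hmu1 : forall t, 0 <= t -> 1 <= mu t).
  { intros t Ht. unfold mu. assert (H := exp_ineq1_le (lam * t)).
    assert (0 <= lam * t) by (apply Rmult_le_pos; lra). lra. }
  assert (Hsabs : forall t, Rabs (s t) = mu t * Rabs (x t)).
  { intros t. unfold s. rewrite Rabs_mult, (Rabs_pos_eq (mu t)). reflexivity. apply Rlt_le, Hmu. }
  assert (Hxb : forall t, 0 <= t -> Rabs (x t) <= Sb).
  { intros t Ht. specialize (Hsb t Ht). rewrite Hsabs in Hsb. specialize (Hmu1 t Ht).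
    assert (0 <= Rabs (x t)) by apply Rabs_pos. nra. }
  assert (Hdec : forall t, 0 <= t -> Rabs (x t) <= Sb * exp (- lam * t)).
  { intros t Ht. specialize (Hsb t Ht). rewrite Hsabs in Hsb.
    assert (E : exp (- lam * t) * mu t = 1).
    { unfold mu. rewrite <- exp_plus. replace (- lam * t + lam * t) with 0 by ring. apply exp_0. }
    assert (He : 0 < exp (- lam * t)) by apply exp_pos.
    replace (Rabs (x t)) with (exp (- lam * t) * (mu t * Rabs (x t))).
    2: { transitivity ((exp (- lam * t) * mu t) * Rabs (x t)). ring. rewrite E. ring. }
    rewrite (Rmult_comm Sb). apply Rmult_le_compat_l; lra. }
  set (Kb := / 2 * (Ab ^ 2 * Sb ^ 2 + 1) + delta / 2 * (Sb ^ 2 + 1)).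
  assert (Hkb : forall t, 0 <= t -> kappa delta (ah t) (x t) <= Kb).
  { intros t Ht. unfold kappa, Kb.
    assert (H1 := sq_le (x t) Sb (Hxb t Ht)).
    assert (H2 := sq_le (ah t) Ab (Hab t Ht)).
    assert (E : (ah t * x t) ^ 2 = ah t ^ 2 * x t ^ 2) by ring.
    assert (H3 : ah t ^ 2 * x t ^ 2 <= Ab ^ 2 * Sb ^ 2).
    { apply Rmult_le_compat; auto; apply pow2_ge_0. }
    assert (H4 : delta / 2 * (x t ^ 2 + 1) <= delta / 2 * (Sb ^ 2 + 1)).
    { apply Rmult_le_compat_l; lra. }
    lra. }
  assert (HKb0 : 0 <= Kb) by (specialize (Hkb 0 (Rle_refl 0)); specialize (Hkap 0); lra).
  assert (HSb1 : 1 <= Sb) by (unfold Sb; lra).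
  assert (HAb0 : 0 <= Ab) by (unfold Ab; assert (0 <= Rabs la) by apply Rabs_pos; assert (0 <= gam * B) by (apply Rmult_le_pos; lra); lra).
  assert (Hub : forall t, 0 <= t -> Rabs (ubar t) <= (k + lam + Kb) * Sb).
  { intros t Ht. replace (ubar t) with ((k + lam + kappa delta (ah t) (x t)) * x t) by (unfold ubar; ring).
    rewrite Rabs_mult, Rabs_pos_eq by (specialize (Hkap t); lra).
    apply Rmult_le_compat. specialize (Hkap t); lra. apply Rabs_pos.
    specialize (Hkb t Ht); lra. apply Hxb, Ht. }
  assert (Hu : forall t, 0 <= t -> Rabs (u t) <= Nb * ((k + lam + Kb) * Sb)).
  { intros t Ht. unfold u. rewrite Rabs_mult. apply Rmult_le_compat.
    apply Rabs_pos. apply Rabs_pos. apply (HNx1 (xi t) (Hxir t Ht)). apply Hub, Ht. }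
  assert (Hxd : forall t, 0 <= t -> Rabs (xidot t) <= (k + lam + Kb) * (2 * B)).
  { intros t Ht. rewrite Rabs_pos_eq by apply Hxid0. rewrite Hxid.
    apply Rmult_le_compat. specialize (Hkap t); lra. apply pow2_ge_0.
    specialize (Hkb t Ht); lra. apply Hs2, Ht. }
  assert (Hahd : forall t, 0 <= t -> Rabs (ahdot t) <= gam * (2 * B) * Sb).
  { intros t Ht. replace (ahdot t) with (gam * s t ^ 2 * x t) by (unfold ahdot, s; ring).
    rewrite Rabs_mult, Rabs_mult, (Rabs_pos_eq gam), (Rabs_pos_eq (s t ^ 2)) by (try apply pow2_ge_0; lra).
    apply Rmult_le_compat. apply Rmult_le_pos. lra. apply pow2_ge_0. apply Rabs_pos.
    apply Rmult_le_compat_l. lra. apply Hs2, Ht. apply Hxb, Ht. }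
  assert (HVa : forall t, 0 <= t -> Rabs (V t) <= B).
  { intros t Ht. rewrite Rabs_pos_eq by apply HV0. apply HVb, Ht. }
  assert (Hxia : forall t, 0 <= t -> Rabs (xi t) <= z0).
  { intros t Ht. specialize (Hxir t Ht). rewrite Rabs_pos_eq by lra. lra. }
  assert (P1 : 0 <= (k + lam + Kb) * Sb) by (apply Rmult_le_pos; lra).
  assert (P2 : 0 <= Nb * ((k + lam + Kb) * Sb)) by (apply Rmult_le_pos; lra).
  assert (P3 : 0 <= (k + lam + Kb) * (2 * B)) by (apply Rmult_le_pos; lra).
  assert (P4 : 0 <= gam * (2 * B) * Sb) by (apply Rmult_le_pos; [apply Rmult_le_pos|]; lra).
  split.
  - exists (B + z0 + Sb + Ab + (k + lam + Kb) * Sb + Nb * ((k + lam + Kb) * Sb)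
      + (k + lam + Kb) * (2 * B) + gam * (2 * B) * Sb).
    intros t Ht.
    specialize (HVa t Ht). specialize (Hxia t Ht). specialize (Hxb t Ht). specialize (Hab t Ht).
    specialize (Hsb t Ht). specialize (Hub t Ht). specialize (Hu t Ht). specialize (Hxd t Ht).
    specialize (Hahd t Ht).
    repeat split; lra.
  - exists Sb. exact Hdec.
Qed.
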